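(* Let $X$ be a finite connected poset, $\theta\in\mathcal{AM}(X)$ and $\mathfrak{C}\in\mathcal{C}(X)/{\sim}$. Then there exists a poset isomorphism or anti-isomorphism $\lambda:\mathrm{supp}(\mathfrak{C})\to\mathrm{supp}(\widetilde\theta(\mathfrak{C}))$ such that for all $x<y$ in $\mathrm{supp}(\mathfrak{C})$ one has $\theta(e_{xy})=e_{\lambda(x)\lambda(y)}$ if $\lambda$ is an isomorphism, and $\theta(e_{xy})=e_{\lambda(y)\lambda(x)}$ if $\lambda$ is an anti-isomorphism.
   Context: For $x<y$ in $X$, $e_{xy}$ denotes the corresponding basis element of the incidence algebra (the indicator of $(x,y)$); $B=\{e_{xy}:x<y\}$. $\mathcal{C}(X)$ is the set of maximal chains. For a bijection $\theta:B\to B$ and $C:u_1<\dots<u_m$ in $\mathcal{C}(X)$, $\theta$ is increasing on $C$ if there is $D:v_1<\dots<v_m$ in $\mathcal{C}(X)$ with $\theta(e_{u_iu_j})=e_{v_iv_j}$ for all $i<j$, and decreasing on $C$ if there is such $D$ with $\theta(e_{u_iu_j})=e_{v_{m-j+1}v_{m-i+1}}$ for all $i<j$; in both cases write $\theta(C)=D$. $\mathcal{M}(X)$ is the set of bijections $B\to B$ increasing or decreasing on every maximal chain. A walk is a sequence $u_0,\dots,u_m$ in which for each $i$ one of $u_i,u_{i+1}$ covers the other; closed if $u_0=u_m$. For a closed walk $\Gamma:u_0,\dots,u_m=u_0$ and $z\in X$: $s^+_{\theta,\Gamma}(z)=|\{i: u_i<u_{i+1},\ \exists w>z,\ \theta(e_{zw})=e_{u_iu_{i+1}}\}|$,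 $s^-_{\theta,\Gamma}(z)=|\{i: u_i>u_{i+1},\ \exists w>z,\ \theta(e_{zw})=e_{u_{i+1}u_i}\}|$, $t^+_{\theta,\Gamma}(z)=|\{i: u_i<u_{i+1},\ \exists w<z,\ \theta(e_{wz})=e_{u_iu_{i+1}}\}|$, $t^-_{\theta,\Gamma}(z)=|\{i: u_i>u_{i+1},\ \exists w<z,\ \theta(e_{wz})=e_{u_{i+1}u_i}\}|$ (with $0\le i\le m-1$). $\theta$ is admissible if $s^+-s^-=t^+-t^-$ at every $z$ for every closed walk $\Gamma$; $\mathcal{AM}(X)$ is the set of admissible elements of $\mathcal{M}(X)$. Two maximal chains are linked if they share an element lying in neither $\mathrm{Min}(X)$ nor $\mathrm{Max}(X)$; $\sim$ is the equivalence relation on $\mathcal{C}(X)$ generated by linkedness. The support of a class $\mathfrak{C}$ is $\mathrm{supp}(\mathfrak{C})=\bigcup_{C\in\mathfrak{C}}C$, with the induced order. For $\theta\in\mathcal{M}(X)$, $\widetilde\theta(\mathfrak{C})$ denotes the $\sim$-class of $\theta(C)$ for $C\in\mathfrak{C}$ (this does not depend on the choice of $C$). *)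

(* Defs.v *)
From HB Require Import structures.
From mathcomp Require Import all_boot all_order all_algebra.
Set Implicit Arguments. Unset Strict Implicit. Unset Printing Implicit Defensive.
Import Order.TTheory.
Local Open Scope order_scope.

Section Incidence.
Context {d : Order.disp_t} {X : finPOrderType d}.

(* The basis B = { e_xy : x < y }, represented by the pairs (x,y) with x < y. *)
Definition Bt := {p : X * X | p.1 < p.2}.

Definition maps_to (theta : Bt -> Bt) (x y u v : X) : Prop :=
  forall p : Bt, val p = (x, y) -> val (theta p) = (u, v).

Definition connected_poset : Prop :=
  forall x y : X, connect (fun a b : X => (a < b) || (b < a)) x y.

Definition chainb (C : {set X}) : bool :=
  [forall x in C, [forall y in C, x >=< y]].

Definition maxchain (C : {set X}) : bool :=
  chainb C && [forall D : {set X}, (chainb D && (C \subset D)) ==> (D == C)].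

Definition incr_on (theta : Bt -> Bt) (C D : {set X}) : Prop :=
  maxchain D /\
  exists f : X -> X,
    {in C &, forall x y, x < y -> f x < f y} /\ f @: C = D /\
    {in C &, forall x y, x < y -> maps_to theta x y (f x) (f y)}.

Definition decr_on (theta : Bt -> Bt) (C D : {set X}) : Prop :=
  maxchain D /\
  exists f : X -> X,
    {in C &, forall x y, x < y -> f y < f x} /\ f @: C = D /\
    {in C &, forall x y, x < y -> maps_to theta x y (f y) (f x)}.

Definition image_chain (theta : Bt -> Bt) (C D : {set X}) : Prop :=
  incr_on theta C D \/ decr_on theta C D.

Definition inM (theta : Bt -> Bt) : Prop :=
  bijective theta /\
  forall C : {set X}, maxchain C -> exists D, image_chain theta C D.

Definition covers (x y : X) : bool := (x < y) && [forall z, ~~ ((x < z) && (z < y))].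
Definition adj (x y : X) : bool := covers x y || covers y x.

Definition steps (x0 : X) (s : seq X) : seq (X * X) := zip (x0 :: s) s.

Definition s_plus (theta : Bt -> Bt) (x0 : X) s (z : X) : nat :=
  count (fun st : X * X => (st.1 < st.2) &&
     [exists p : Bt, ((val p).1 == z) && (val (theta p) == st)]) (steps x0 s).
Definition s_minus (theta : Bt -> Bt) (x0 : X) s (z : X) : nat :=
  count (fun st : X * X => (st.2 < st.1) &&
     [exists p : Bt, ((val p).1 == z) && (val (theta p) == (st.2, st.1))]) (steps x0 s).
Definition t_plus (theta : Bt -> Bt) (x0 : X) s (z : X) : nat :=
  count (fun st : X * X => (st.1 < st.2) &&
     [exists p : Bt, ((val p).2 == z) && (val (theta p) == st)]) (steps x0 s).
Definition t_minus (theta : Bt -> Bt) (x0 : X) s (z : X) : nat :=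
  count (fun st : X * X => (st.2 < st.1) &&
     [exists p : Bt, ((val p).2 == z) && (val (theta p) == (st.2, st.1))]) (steps x0 s).

Definition admissible (theta : Bt -> Bt) : Prop :=
  forall (x0 : X) (s : seq X), path adj x0 s -> last x0 s = x0 ->
  forall z : X,
    ((s_plus theta x0 s z)%:Z - (s_minus theta x0 s z)%:Z =
     (t_plus theta x0 s z)%:Z - (t_minus theta x0 s z)%:Z)%R.

Definition inAM (theta : Bt -> Bt) : Prop := inM theta /\ admissible theta.

Definition is_min (x : X) : bool := [forall y, ~~ (y < x)].
Definition is_max (x : X) : bool := [forall y, ~~ (x < y)].

Definition linked (C D : {set X}) : bool :=
  [&& maxchain C, maxchain D & [exists x in C :&: D, ~~ is_min x && ~~ is_max x]].

Definition chain_equiv (C D : {set X}) : bool := connect linked C D.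

Definition supp (C : {set X}) : {set X} :=
  \bigcup_(D | maxchain D && chain_equiv C D) D.

End Incidence.

(* Main.v *)
Require Import Defs.
From HB Require Import structures.
From mathcomp Require Import all_boot all_order all_algebra.
From mathcomp Require Import all_fingroup zify ring.
Import Order.TTheory.
Local Open Scope order_scope.
Set Implicit Arguments. Unset Strict Implicit. Unset Printing Implicit Defensive.


Section P1.
Context {d : Order.disp_t} {X : finPOrderType d}.

Lemma chainbP (C : {set X}) : reflect {in C &, forall x y, x >=< y} (chainb C).
Proof.
apply: (iffP idP).
- move=> /forall_inP H x y xC yC; exact: (forall_inP (H x xC) y yC).
- move=> H; apply/forall_inP => x xC; apply/forall_inP => y yC; exact: H.
Qed.

Lemma maxchain_chain (C : {set X}) : maxchain C -> chainb C.
Proof. by case/andP. Qed.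

Lemma maxchain_in (E : {set X}) w : maxchain E -> chainb (w |: E) -> w \in E.
Proof.
case/andP=> _ /forallP /(_ (w |: E)); rewrite subsetUr andbT => /implyP H /H /eqP <-.
by rewrite setU11.
Qed.

Lemma maxchainP (E : {set X}) : maxchain E ->
  forall w, {in E, forall e, w >=< e} -> w \in E.
Proof.
move=> mE w Hw; apply: (maxchain_in mE); apply/chainbP => a b.
have cE := chainbP _ (maxchain_chain mE).
rewrite !inE => /predU1P[->|aE] /predU1P[->|bE].
- exact: comparablexx.
- exact: Hw.
- by rewrite comparable_sym; apply: Hw.
- exact: cE.
Qed.

Lemma maxchain_min (E : {set X}) x : maxchain E -> x \in E ->
  is_min x = [forall e in E, x <= e].
Proof.
move=> mE xE; have cE := chainbP _ (maxchain_chain mE).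
apply/idP/idP.
- move=> /forallP Hm; apply/forall_inP => e eE.
  case: (comparable_ltgtP (cE x e xE eE)) => [xe|ex|xe] //.
  by have := Hm e; rewrite ex.
- move=> /forall_inP He; apply/forallP => y; apply/negP => yx.
  have yE : y \in E.
    apply: (maxchainP mE) => e eE; have := He e eE => xe.
    by apply/orP; left; apply: le_trans xe; apply: ltW.
  by have := He y yE; rewrite (lt_geF yx).
Qed.

Lemma maxchain_max (E : {set X}) x : maxchain E -> x \in E ->
  is_max x = [forall e in E, e <= x].
Proof.
move=> mE xE; have cE := chainbP _ (maxchain_chain mE).
apply/idP/idP.
- move=> /forallP Hm; apply/forall_inP => e eE.
  case: (comparable_ltgtP (cE x e xE eE)) => [xe|ex|xe] //.
  by have := Hm e; rewrite xe.
- move=> /forall_inP He; apply/forallP => y; apply/negP => yx.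
  have yE : y \in E.
    apply: (maxchainP mE) => e eE; have := He e eE => xe.
    by apply/orP; right; apply: le_trans xe _; apply: ltW.
  by have := He y yE; rewrite (lt_geF yx).
Qed.

Definition ext (x : X) := is_min x || is_max x.

Lemma maxchain_of (E : {set X}) : chainb E ->
  (forall D, chainb D -> E \subset D -> D \subset E) -> maxchain E.
Proof.
move=> cE H; apply/andP; split=> //; apply/forallP => D; apply/implyP.
case/andP=> cD ED; by rewrite eqEsubset H.
Qed.

Lemma maxchain_ext (A : {set X}) : chainb A -> exists E, maxchain E /\ A \subset E.
Proof.
move=> cA.
have PA : (chainb A && (A \subset A)) by rewrite cA subxx.
case: (@arg_maxnP _ A (fun B : {set X} => chainb B && (A \subset B)) (fun B : {set X} => #|B|) PA) => B0 /andP[cB0 AB0] Hmax.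
exists B0; split=> //; apply: maxchain_of => // D cD B0D.
have : #|D| <= #|B0| by apply: Hmax; rewrite cD (subset_trans AB0 B0D).
move=> le; have /eqP <- // : B0 == D by rewrite eqEcard B0D.
Qed.

Lemma splice_maxchain (E1 E2 : {set X}) z : maxchain E1 -> maxchain E2 ->
  z \in E1 -> z \in E2 ->
  maxchain ([set x in E1 | x <= z] :|: [set x in E2 | z <= x]).
Proof.
move=> m1 m2 z1 z2; set E3 := _ :|: _.
have c1 := chainbP _ (maxchain_chain m1); have c2 := chainbP _ (maxchain_chain m2).
have cE3 : chainb E3.
  apply/chainbP => a b; rewrite !inE => /orP[/andP[a1 az]|/andP[a2 za]]
    /orP[/andP[b1 bz]|/andP[b2 zb]].
  - exact: c1.
  - by apply/orP; left; apply: le_trans az zb.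
  - by apply/orP; right; apply: le_trans bz za.
  - exact: c2.
apply: maxchain_of => // D cD E3D; apply/subsetP => w wD.
have cDD := chainbP _ cD.
have zD : z \in D by apply: (subsetP E3D); rewrite !inE z1 lexx.
case/orP: (cDD w z wD zD) => [wz|zw].
- have wE1 : w \in E1.
    apply: (maxchainP m1) => e eE; case/orP: (c1 e z eE z1) => [ez|ze].
    + apply: cDD => //; apply: (subsetP E3D); by rewrite !inE eE ez.
    + by apply/orP; left; apply: le_trans wz ze.
  by rewrite !inE wE1 wz.
- have wE2 : w \in E2.
    apply: (maxchainP m2) => e eE; case/orP: (c2 e z eE z2) => [ez|ze].
    + by apply/orP; right; apply: le_trans ez zw.
    + apply: cDD => //; apply: (subsetP E3D); by rewrite !inE eE ze orbT.
  by rewrite !inE wE2 zw orbT.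
Qed.

Lemma forall_imset (E : {set X}) (g : X -> X) (P : pred X) :
  [forall e in E, P (g e)] = [forall y in g @: E, P y].
Proof.
apply/forall_inP/forall_inP => H.
- by move=> y /imsetP[e eE ->]; apply: H.
- by move=> e eE; apply: H; apply: imset_f.
Qed.

Definition smono (b : bool) (E : {set X}) (g : X -> X) :=
  {in E &, forall x y, x < y -> if b then g x < g y else g y < g x}.

Lemma smono_le b E g : chainb E -> smono b E g ->
  {in E &, forall x y, (x <= y) = (if b then g x <= g y else g y <= g x)}.
Proof.
move=> /chainbP cE sg x y xE yE.
case: (comparable_ltgtP (cE x y xE yE)) => [xy|yx|xy].
- by have := sg x y xE yE xy; case: (b) => /ltW ->.
- by have := sg y x yE xE yx; case: (b) => /lt_geF ->.
- by rewrite xy; case: (b); rewrite lexx.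
Qed.

Lemma smono_inj b E g : smono b E g -> chainb E -> {in E &, injective g}.
Proof.
move=> sg /chainbP cE x y xE yE gxy.
case: (comparable_ltgtP (cE x y xE yE)) => [xy|yx|//].
- by have := sg x y xE yE xy; rewrite gxy; case: (b); rewrite ltxx.
- by have := sg y x yE xE yx; rewrite gxy; case: (b); rewrite ltxx.
Qed.

Lemma ext_image b (E D : {set X}) g : maxchain E -> maxchain D -> g @: E = D ->
  smono b E g -> {in E, forall x, ext (g x) = ext x}.
Proof.
move=> mE mD gED sg x xE.
have gxD : g x \in D by rewrite -gED imset_f.
have hle := smono_le (maxchain_chain mE) sg.
rewrite /ext (maxchain_min mE xE) (maxchain_max mE xE)
  (maxchain_min mD gxD) (maxchain_max mD gxD) -gED -!forall_imset.
have e1 : [forall e in E, x <= e] = [forall e in E, if b then g x <= g e else g e <= g x].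
  by apply: eq_forallb => e; case eE: (e \in E) => //=; rewrite hle.
have e2 : [forall e in E, e <= x] = [forall e in E, if b then g e <= g x else g x <= g e].
  by apply: eq_forallb => e; case eE: (e \in E) => //=; rewrite hle.
rewrite e1 e2; case: b {e1 e2 hle sg} => //; exact: orbC.
Qed.

End P1.


Section P2.
Context {d : Order.disp_t} {X : finPOrderType d}.
Local Notation BT := (@Bt d X).

Definition img (th : BT -> BT) (C D : {set X}) (f : X -> X) (b : bool) :=
  [/\ maxchain D, smono b C f, f @: C = D &
      {in C &, forall x y, x < y -> maps_to th x y (if b then f x else f y) (if b then f y else f x)}].

Definition inMb (th : BT -> BT) := forall C, maxchain C -> exists D f b, img th C D f b.

Lemma image_chain_img th C D : image_chain th C D -> exists f b, img th C D f b.
Proof.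
case=> [[mD [f [sf [fCD mt]]]]|[mD [f [sf [fCD mt]]]]].
- by exists f, true; split.
- by exists f, false; split.
Qed.

Lemma img_image_chain th C D f b : img th C D f b ->
  if b then incr_on th C D else decr_on th C D.
Proof. by case=> mD sf fCD mt; case: b sf mt => sf mt; split=> //; exists f. Qed.

Lemma inM_inMb th : inM th -> inMb th.
Proof.
case=> _ H C mC; case: (H C mC) => D /image_chain_img [f [b h]].
by exists D, f, b.
Qed.

Lemma img_val th C D f b (h : img th C D f b) x y (p : BT) :
  x \in C -> y \in C -> x < y -> val p = (x, y) ->
  val (th p) = if b then (f x, f y) else (f y, f x).
Proof. by case: h => _ _ _ mt xC yC xy pv; rewrite (mt x y xC yC xy p pv); case: (b). Qed.

Lemma img_ext th1 th2 C D f b : (forall q, th1 q = th2 q) ->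
  img th1 C D f b -> img th2 C D f b.
Proof.
move=> e [mD sf fCD mt]; split=> // x y xC yC xy p pv.
by rewrite -e; apply: mt.
Qed.

Lemma img_id C : maxchain C -> img id C C id true.
Proof.
move=> mC; split.
- exact: mC.
- by move=> x y _ _.
- by apply/setP => x; apply/imsetP/idP => [[y yC ->] //|xC]; exists x.
- by move=> x y _ _ _ p.
Qed.

Lemma img_comp th1 th2 C D1 D2 f1 f2 b1 b2 :
  img th1 C D1 f1 b1 -> img th2 D1 D2 f2 b2 ->
  img (th2 \o th1) C D2 (f2 \o f1) (b1 == b2).
Proof.
move=> [mD1 s1 fC1 mt1] [mD2 s2 fC2 mt2].
have inD1 x : x \in C -> f1 x \in D1 by move=> xC; rewrite -fC1 imset_f.
split=> //.
- move=> x y xC yC xy /=; have := s1 x y xC yC xy.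
  case: b1 {mt1 s1}; case: b2 {mt2} s2 => s2 /= h.
  + exact: s2 (inD1 _ xC) (inD1 _ yC) h.
  + exact: s2 (inD1 _ xC) (inD1 _ yC) h.
  + exact: s2 (inD1 _ yC) (inD1 _ xC) h.
  + exact: s2 (inD1 _ yC) (inD1 _ xC) h.
- by rewrite imset_comp fC1.
- move=> x y xC yC xy p pv /=.
  have h1 := mt1 x y xC yC xy p pv.
  have := s1 x y xC yC xy.
  case: b1 h1 {mt1 s1} => h1 h; case: b2 {s2} mt2 => mt2 /=.
  + by rewrite (mt2 _ _ (inD1 _ xC) (inD1 _ yC) h _ h1).
  + by rewrite (mt2 _ _ (inD1 _ xC) (inD1 _ yC) h _ h1).
  + by rewrite (mt2 _ _ (inD1 _ yC) (inD1 _ xC) h _ h1).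
  + by rewrite (mt2 _ _ (inD1 _ yC) (inD1 _ xC) h _ h1).
Qed.

Lemma inMb_iter th : inMb th -> forall n, inMb (iter n th).
Proof.
move=> H; elim=> [|n IH] C mC.
- by exists C, id, true; apply: img_id.
- case: (IH C mC) => D1 [f1 [b1 h1]].
  have mD1 : maxchain D1 by case: h1.
  case: (H D1 mD1) => D2 [f2 [b2 h2]].
  exists D2, (f2 \o f1), (b1 == b2).
  by apply: img_ext (img_comp h1 h2) => q.
Qed.

Definition st (v : X) (p : X * X) : int := ((p.1 == v)%:Z - (p.2 == v)%:Z)%R.

Lemma img_add th C D f b (h : img th C D f b) x z y (p p1 p2 : BT) v :
  x \in C -> z \in C -> y \in C -> x < z -> z < y ->
  val p = (x, y) -> val p1 = (x, z) -> val p2 = (z, y) ->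
  st v (val (th p)) = (st v (val (th p1)) + st v (val (th p2)))%R.
Proof.
move=> xC zC yC xz zy pv p1v p2v.
have xy := lt_trans xz zy.
rewrite (img_val h xC yC xy pv) (img_val h xC zC xz p1v) (img_val h zC yC zy p2v).
by case: (b); rewrite /st /=; lia.
Qed.

Lemma chain3 (x w y : X) : x < w -> w < y -> chainb [set x; w; y].
Proof.
move=> xw wy; have xy := lt_trans xw wy.
apply/chainbP => a b; rewrite !inE => /orP[/orP[]|] /eqP-> /orP[/orP[]|] /eqP->;
  first [exact: comparablexx | exact: lt_comparable |
         rewrite comparable_sym; exact: lt_comparable].
Qed.

Lemma img_in th C D f b (h : img th C D f b) x : x \in C -> f x \in D.
Proof. by case: h => _ _ <- _ xC; apply: imset_f. Qed.

Lemma noncover_img th : inMb th -> forall p : BT,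
  covers (val (th p)).1 (val (th p)).2 -> covers (val p).1 (val p).2.
Proof.
move=> H [[x y] /= xy] /andP[_ /forallP cv]; rewrite /covers xy /=.
apply/forallP => w; apply/negP => /andP[xw wy].
case: (maxchain_ext (chain3 xw wy)) => E [mE sE].
have xE : x \in E by apply: (subsetP sE); rewrite !inE eqxx.
have wE : w \in E by apply: (subsetP sE); rewrite !inE eqxx orbT.
have yE : y \in E by apply: (subsetP sE); rewrite !inE eqxx !orbT.
case: (H E mE) => D [f [b h]].
have e := img_val h (p := exist _ (x, y) xy) xE yE xy erefl; move: cv; rewrite e.
case: h => _ sf _ _; have s1 := sf x w xE wE xw; have s2 := sf w y wE yE wy.
case: (b) s1 s2 => s1 s2 /(_ (f w)); by rewrite s1 s2.
Qed.

End P2.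


Lemma iter_id (T : finType) (f : T -> T) : injective f ->
  exists k, (0 < k)%N /\ forall x, iter k f x = x.
Proof.
move=> fi; set s := perm fi; exists #[s]%g; split; first exact: order_gt0.
move=> x; have <- : (s ^+ #[s])%g x = iter #[s]%g f x.
  by rewrite permX; apply: eq_iter => y; rewrite permE.
by rewrite expg_order perm1.
Qed.

Section P3.
Context {d : Order.disp_t} {X : finPOrderType d}.
Local Notation BT := (@Bt d X).

Definition step_val (g : X -> X -> int) (st : X * X) : int :=
  if st.1 < st.2 then g st.1 st.2 else if st.2 < st.1 then (- g st.2 st.1)%R else 0%R.

Definition flow (g : X -> X -> int) (x0 : X) (s : seq X) : int :=
  (\sum_(st <- steps x0 s) step_val g st)%R.

Lemma steps_cons (x0 y : X) (s : seq X) : steps x0 (y :: s) = (x0, y) :: steps y s.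
Proof. by []. Qed.

Lemma steps_cat (x0 : X) (s1 s2 : seq X) : steps x0 (s1 ++ s2) = steps x0 s1 ++ steps (last x0 s1) s2.
Proof. by elim: s1 x0 => [|y s1 IH] x0 //=; rewrite !steps_cons IH. Qed.

Lemma flow_cat g (x0 : X) (s1 s2 : seq X) : flow g x0 (s1 ++ s2) = (flow g x0 s1 + flow g (last x0 s1) s2)%R.
Proof. by rewrite /flow steps_cat big_cat. Qed.

Lemma flow_cons g (x0 y : X) (s : seq X) : flow g x0 (y :: s) = (step_val g (x0, y) + flow g y s)%R.
Proof. by rewrite /flow steps_cons big_cons. Qed.

Lemma flow_nil g (x0 : X) : flow g x0 [::] = 0%R.
Proof. by rewrite /flow big_nil. Qed.

Definition walk (x y : X) (s : seq X) := path adj x s && (last x s == y).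

Lemma walk_cat (x y z : X) (s1 s2 : seq X) : walk x y s1 -> walk y z s2 -> walk x z (s1 ++ s2).
Proof.
rewrite /walk => /andP[p1 /eqP l1] /andP[p2 l2].
by rewrite cat_path p1 l1 p2 last_cat l1.
Qed.

Lemma cover_walk_ind n : forall a b : X, leq #|[set w | a < w < b]| n -> a < b ->
  (exists s, walk a b s) /\ (exists s, walk b a s).
Proof.
elim: n => [|n IH] a b.
- rewrite leqn0 => /eqP /cards0_eq e ab.
  have cab : covers a b.
    rewrite /covers ab; apply/forallP => w; apply/negP => H.
    have : w \in [set w | a < w < b] by rewrite inE.
    by rewrite e inE.
  split.
  + by exists [:: b]; rewrite /walk /= /adj cab eqxx.
  + by exists [:: a]; rewrite /walk /= /adj cab orbT eqxx.
- move=> hn ab.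
  case cab: (covers a b).
  + split.
    * by exists [:: b]; rewrite /walk /= /adj cab eqxx.
    * by exists [:: a]; rewrite /walk /= /adj cab orbT eqxx.
  + move: cab; rewrite /covers ab /= => /negbT /forallPn [w].
    rewrite negbK => /andP[aw wb].
    have sub1 : [set u | a < u < w] \proper [set u | a < u < b].
      apply/properP; split.
      * apply/subsetP => u; rewrite !inE => /andP[au uw]; by rewrite au (lt_trans uw wb).
      * by exists w; rewrite !inE ?aw ?wb // ltxx andbF.
    have sub2 : [set u | w < u < b] \proper [set u | a < u < b].
      apply/properP; split.
      * apply/subsetP => u; rewrite !inE => /andP[wu ub]; by rewrite ub (lt_trans aw wu).
      * by exists w; rewrite !inE ?aw ?wb // ltxx.
    have h1 : leq #|[set u | a < u < w]| n.
      by rewrite -ltnS; apply: leq_trans (proper_card sub1) hn.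
    have h2 : leq #|[set u | w < u < b]| n.
      by rewrite -ltnS; apply: leq_trans (proper_card sub2) hn.
    case: (IH a w h1 aw) => [[s1 w1] [s1' w1']].
    case: (IH w b h2 wb) => [[s2 w2] [s2' w2']].
    split; [exists (s1 ++ s2); exact: walk_cat w1 w2 | exists (s2' ++ s1'); exact: walk_cat w2' w1'].
Qed.

Lemma walk_cmp (a b : X) : (a < b) || (b < a) -> exists s, walk a b s.
Proof.
case/orP => H.
- by case: (cover_walk_ind (leqnn _) H).
- by case: (cover_walk_ind (leqnn _) H).
Qed.

Lemma walk_conn (hX : @connected_poset d X) (x y : X) : exists s, walk x y s.
Proof.
have := hX x y; case/connectP => p.
elim: p x => [|z p IH] x /=.
- by move=> _ ->; exists [::]; rewrite /walk /= eqxx.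
- case/andP => xz pp ly; case: (walk_cmp xz) => s1 w1.
  case: (IH z pp ly) => s2 w2; exists (s1 ++ s2); exact: walk_cat w2.
Qed.

Section Pot.
Variable hX : @connected_poset d X.
Variable r : X.

Definition W (x y : X) : seq X := xchoose (walk_conn hX x y).
Lemma W_walk x y : walk x y (W x y).
Proof. exact: (xchooseP (walk_conn hX x y)). Qed.

Definition pot (g : X -> X -> int) (x : X) : int := flow g r (W r x).

Lemma potP (g : X -> X -> int) :
  (forall x0 s, path adj x0 s -> last x0 s = x0 -> flow g x0 s = 0%R) ->
  forall a b, covers a b -> g a b = (pot g b - pot g a)%R.
Proof.
move=> Z a b cab.
have ab : a < b by case/andP: cab.
have wra := W_walk r a; have wbr := W_walk b r; have wrb := W_walk r b.
have c1 : walk r r (W r b ++ W b r) by apply: walk_cat wbr.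
have wab : walk a b [:: b] by rewrite /walk /= /adj cab eqxx.
have c2 : walk r r (W r a ++ ([:: b] ++ W b r)).
  by apply: walk_cat wra _; apply: walk_cat wab wbr.
have z1 := Z r _ (proj1 (andP c1)) (eqP (proj2 (andP c1))).
have z2 := Z r _ (proj1 (andP c2)) (eqP (proj2 (andP c2))).
move: z1 z2; rewrite !flow_cat /=.
move: (wra) (wrb) => /andP[_ /eqP->] /andP[_ /eqP->].
rewrite flow_cons flow_nil /step_val /= ab /pot => z1 z2.
apply/eqP; rewrite -GRing.subr_eq0; apply/eqP.
by move: z1 z2; lia.
Qed.

End Pot.

End P3.


Section P4.
Context {d : Order.disp_t} {X : finPOrderType d}.
Local Notation BT := (@Bt d X).

Lemma sum_ind (h : X -> int) (a : X) : (\sum_(u : X) (h u * (a == u)%:Z))%R = h a.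
Proof.
rewrite (bigD1 a) //= eqxx GRing.mulr1 big1 ?GRing.addr0 // => u /negbTE.
by rewrite eq_sym => ->; rewrite GRing.mulr0.
Qed.

Lemma st_pot (h : X -> int) (p : X * X) :
  (h p.2 - h p.1)%R = (- \sum_(u : X) (h u * st u p))%R.
Proof.
rewrite /st.
have -> : (\sum_(u : X) (h u * ((p.1 == u)%:Z - (p.2 == u)%:Z)))%R =
          (\sum_(u : X) (h u * (p.1 == u)%:Z) - \sum_(u : X) (h u * (p.2 == u)%:Z))%R.
  by rewrite -GRing.sumrB; apply: eq_bigr => u _; rewrite GRing.mulrBr.
by rewrite !sum_ind; ring.
Qed.

Lemma extend_cut (th : BT -> BT) (v : X) (h : X -> int) : inMb th ->
  (forall q : BT, covers (val q).1 (val q).2 -> st v (val (th q)) = (h (val q).2 - h (val q).1)%R) ->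
  forall q : BT, st v (val (th q)) = (h (val q).2 - h (val q).1)%R.
Proof.
move=> HM Hc q.
have : leq #|[set w | (val q).1 < w < (val q).2]| #|[set w | (val q).1 < w < (val q).2]| by [].
move: {2}#|_| => n; elim: n q => [|n IH] [[x y] /= xy] hn.
- apply: Hc => /=; rewrite /covers xy; apply/forallP => w; apply/negP => H.
  move: hn; rewrite leqn0 => /eqP /cards0_eq e.
  have : w \in [set w | x < w < y] by rewrite inE.
  by rewrite e inE.
- case cxy: (covers x y); first by apply: Hc.
  move: cxy; rewrite /covers xy /= => /negbT /forallPn [w].
  rewrite negbK => /andP[xw wy].
  have sub1 : [set u | x < u < w] \proper [set u | x < u < y].
    apply/properP; split.
    * apply/subsetP => u; rewrite !inE => /andP[au uw]; by rewrite au (lt_trans uw wy).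
    * by exists w; rewrite !inE ?xw ?wy // ltxx andbF.
  have sub2 : [set u | w < u < y] \proper [set u | x < u < y].
    apply/properP; split.
    * apply/subsetP => u; rewrite !inE => /andP[wu ub]; by rewrite ub (lt_trans xw wu).
    * by exists w; rewrite !inE ?xw ?wy // ltxx.
  have h1 : leq #|[set u | x < u < w]| n.
    by rewrite -ltnS; apply: leq_trans (proper_card sub1) hn.
  have h2 : leq #|[set u | w < u < y]| n.
    by rewrite -ltnS; apply: leq_trans (proper_card sub2) hn.
  have e1 := IH (exist _ (x, w) xw) h1; have e2 := IH (exist _ (w, y) wy) h2.
  case: (maxchain_ext (chain3 xw wy)) => E [mE sE].
  have xE : x \in E by apply: (subsetP sE); rewrite !inE eqxx.
  have wE : w \in E by apply: (subsetP sE); rewrite !inE eqxx orbT.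
  have yE : y \in E by apply: (subsetP sE); rewrite !inE eqxx !orbT.
  case: (HM E mE) => D [f [b hi]].
  rewrite (img_add hi (p := exist _ (x, y) xy) (p1 := exist _ (x, w) xw) (p2 := exist _ (w, y) wy) v xE wE yE xw wy erefl erefl erefl).
  rewrite e1 e2 /=; ring.
Qed.

Section Adm.
Variable th thi : BT -> BT.
Hypothesis thK : cancel th thi.
Hypothesis thiK : cancel thi th.
Hypothesis HM : inMb th.
Hypothesis Hadm : admissible th.
Hypothesis hX : @connected_poset d X.
Variable r : X.

Definition gz (v : X) (a b : X) : int :=
  (([exists p : BT, ((val p).1 == v) && (val (th p) == (a, b))] : nat)%:Z -
   ([exists p : BT, ((val p).2 == v) && (val (th p) == (a, b))] : nat)%:Z)%R.

Lemma flow_gz_list v (l : seq (X * X)) :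
  (\sum_(st <- l) step_val (gz v) st)%R =
  ((count (fun st : X * X => (st.1 < st.2)%O &&
     [exists p : BT, ((val p).1 == v) && (val (th p) == st)]) l)%:Z
   - (count (fun st : X * X => (st.2 < st.1)%O &&
     [exists p : BT, ((val p).1 == v) && (val (th p) == (st.2, st.1))]) l)%:Z
   - (count (fun st : X * X => (st.1 < st.2)%O &&
     [exists p : BT, ((val p).2 == v) && (val (th p) == st)]) l)%:Z
   + (count (fun st : X * X => (st.2 < st.1)%O &&
     [exists p : BT, ((val p).2 == v) && (val (th p) == (st.2, st.1))]) l)%:Z)%R.
Proof.
elim: l => [|[a b] l IH]; first by rewrite big_nil.
rewrite big_cons IH /= /step_val /gz /=.
case ab: (a < b).
- have -> : (b < a) = false by apply: lt_gtF.
  rewrite /=; lia.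
- case ba: (b < a) => /=; lia.
Qed.

Lemma flow_gz_zero v x0 s : path adj x0 s -> last x0 s = x0 -> flow (gz v) x0 s = 0%R.
Proof.
move=> P L; have := Hadm P L v.
rewrite /flow flow_gz_list /s_plus /s_minus /t_plus /t_minus.
lia.
Qed.

Lemma gz_cover v (q : BT) :
  gz v (val q).1 (val q).2 = st v (val (thi q)).
Proof.
rewrite /gz /st.
have E (P : pred BT) : [exists p : BT, P p && (val (th p) == ((val q).1, (val q).2))] = P (thi q).
  apply/existsP/idP => [[p /andP[Pp /eqP e]]|Pq].
  - have : th p = q by apply: val_inj; rewrite e -surjective_pairing.
    by move=> e'; rewrite -e' thK.
  - by exists (thi q); rewrite Pq thiK -surjective_pairing eqxx.
by rewrite (E (fun p => (val p).1 == v)) (E (fun p => (val p).2 == v)).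
Qed.

Lemma thi_cover (q : BT) : covers (val q).1 (val q).2 -> covers (val (thi q)).1 (val (thi q)).2.
Proof. by move=> c; apply: (noncover_img HM); rewrite thiK. Qed.

Lemma Pm m v : exists h : X -> int, forall q : BT, covers (val q).1 (val q).2 ->
  st v (val (iter m thi q)) = (h (val q).2 - h (val q).1)%R.
Proof.
elim: m v => [|m IH] v.
- exists (fun u => - (u == v)%:Z)%R => q _ /=; rewrite /st; ring.
- case: (IH v) => h Hh.
  exists (fun x => - \sum_(u : X) (h u * pot hX r (gz u) x))%R => q cq.
  rewrite iterSr (Hh _ (thi_cover cq)) st_pot.
  have e : forall u, st u (val (thi q)) = (pot hX r (gz u) (val q).2 - pot hX r (gz u) (val q).1)%R.
    move=> u; rewrite -gz_cover; apply: potP => //.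
    move=> x0 s P L; exact: flow_gz_zero.
  under eq_bigr => u _ do rewrite e GRing.mulrBr.
  by rewrite GRing.sumrB; ring.
Qed.

Lemma Phi_th v : exists h : X -> int, forall q : BT,
  st v (val (th q)) = (h (val q).2 - h (val q).1)%R.
Proof.
have thi_inj : injective thi by apply: (can_inj thiK).
case: (iter_id thi_inj) => k [k0 Hk].
have e q : th q = iter k.-1 thi q.
  by rewrite -{1}(Hk q); case: k k0 {Hk} => // k _; rewrite iterS thiK.
case: (Pm k.-1 v) => h Hh; exists h; apply: extend_cut HM _ => q cq.
by rewrite e; apply: Hh.
Qed.

Lemma inMb_thi : inMb thi.
Proof.
have th_inj : injective th by apply: (can_inj thK).
case: (iter_id th_inj) => k [k0 Hk].
have e q : iter k.-1 th q = thi q.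
  by rewrite -{2}(Hk q); case: k k0 {Hk} => // k _; rewrite iterS thK.
move=> C mC; case: (inMb_iter HM k.-1 mC) => D [f [b h]].
by exists D, f, b; apply: img_ext h.
Qed.

Lemma Phi_thi v : exists h : X -> int, forall q : BT,
  st v (val (thi q)) = (h (val q).2 - h (val q).1)%R.
Proof.
case: (Pm 1 v) => h Hh; exists h; apply: extend_cut inMb_thi _ => q cq.
exact: Hh.
Qed.

End Adm.
End P4.


Section P5.
Context {d : Order.disp_t} {X : finPOrderType d}.
Local Notation BT := (@Bt d X).

Definition ev (a v : X) : int := (a == v)%:Z.

Lemma VL (p q r s : X) : (forall v, ev p v - ev q v = ev r v - ev s v)%R -> r != s ->
  p = r /\ q = s.
Proof.
move=> H rs; have h1 := H r; have h2 := H s; move: h1 h2.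
rewrite /ev !eqxx (eq_sym s r) (negbTE rs).
move=> h1 h2; split; apply/eqP.
- move: h1; case: (p == r) => //; case: (q == r) => /= h; exfalso; lia.
- move: h2; case: (q == s) => //; case: (p == s) => /= h; exfalso; lia.
Qed.

Lemma VL' (p q r s : X) : (forall v, ev p v - ev q v = ev r v - ev s v)%R -> p != q ->
  p = r /\ q = s.
Proof.
move=> H pq; have [a b] : r = p /\ s = q.
  by apply: VL => // v; rewrite H.
by [].
Qed.

Section Core.
Variable th : BT -> BT.
Hypothesis HM : inMb th.
Variable H : X -> X -> int.
Hypothesis HH : forall v (q : BT), st v (val (th q)) = (H v (val q).2 - H v (val q).1)%R.
Variables (C D : {set X}) (f0 : X -> X) (b : bool).
Hypothesis hC : maxchain C.
Hypothesis hCD : img th C D f0 b.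
Variable x0 : X.
Hypothesis x0C : x0 \in C.

Definition H' v x : int := if b then H v x else (- H v x)%R.
Definition cc v : int := (H' v x0 + ev (f0 x0) v)%R.
Definition Lam x v : int := (cc v - H' v x)%R.
Definition lam x : X := odflt x [pick v | Lam x v == 1%R].
Definition unit x := forall v, Lam x v = ev (lam x) v.

Lemma KR (q : BT) v : (Lam (val q).2 v - Lam (val q).1 v)%R =
  if b then (ev (val (th q)).2 v - ev (val (th q)).1 v)%R
  else (ev (val (th q)).1 v - ev (val (th q)).2 v)%R.
Proof.
have := HH v q; rewrite /Lam /H' /st /ev; case: (b) => e; lia.
Qed.

Lemma unit_of x a : (forall v, Lam x v = ev a v) -> unit x /\ lam x = a.
Proof.
move=> Ha; suff e : lam x = a by split=> // v; rewrite e.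
rewrite /lam; case: pickP => [v /eqP|/(_ a)].
- by rewrite Ha /ev; case: (a =P v).
- by rewrite Ha /ev eqxx.
Qed.

Lemma UI x y (q : BT) : unit x -> unit y -> val q = (x, y) ->
  val (th q) = if b then (lam x, lam y) else (lam y, lam x).
Proof.
move=> ux uy qv; have := KR q; rewrite qv /= => K.
have ne : (val (th q)).1 != (val (th q)).2 by case: (th q) => [[p1 p2] /= lt]; rewrite lt_eqF.
case: (b) K => K.
- have [e1 e2] : lam y = (val (th q)).2 /\ lam x = (val (th q)).1.
    apply: VL; last by rewrite eq_sym.
    by move=> v; rewrite -K ux uy.
  by rewrite e1 e2 -surjective_pairing.
- have [e1 e2] : lam y = (val (th q)).1 /\ lam x = (val (th q)).2.
    by apply: VL => // v; rewrite -K ux uy.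
  by rewrite e1 e2 -surjective_pairing.
Qed.

Definition QQ (E : {set X}) := forall x, x \in E -> unit x.

Lemma QQ_smono E : chainb E -> QQ E -> smono b E lam.
Proof.
move=> cE Q x y xE yE xy.
have := UI (q := exist _ (x, y) xy) (Q x xE) (Q y yE) erefl.
case: (th _) => [[p1 p2] /= lt]; by case: (b) => -[e1 e2]; rewrite -e1 -e2.
Qed.

Lemma KRlt (E' D' : {set X}) g b' : img th E' D' g b' ->
  forall x y, x \in E' -> y \in E' -> x < y -> forall v,
  (Lam y v - Lam x v)%R = if b == b' then (ev (g y) v - ev (g x) v)%R
                          else (ev (g x) v - ev (g y) v)%R.
Proof.
move=> hi x y xE yE xy v.
have := KR (exist _ (x, y) xy) v; rewrite /=.
rewrite (img_val hi (p := exist _ (x, y) xy) xE yE xy erefl).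
by case: (b); case: (b').
Qed.

Lemma KRE (E' D' : {set X}) g b' : chainb E' -> img th E' D' g b' ->
  forall x y, x \in E' -> y \in E' -> forall v,
  (Lam y v - Lam x v)%R = if b == b' then (ev (g y) v - ev (g x) v)%R
                          else (ev (g x) v - ev (g y) v)%R.
Proof.
move=> /chainbP cE hi x y xE yE v.
case: (comparable_ltgtP (cE x y xE yE)) => [xy|yx|<-].
- exact: (KRlt hi).
- have := KRlt hi yE xE yx v; case: (b == b') => e; lia.
- by case: (b == b'); rewrite !GRing.subrr.
Qed.


Lemma lam_inj E : chainb E -> QQ E -> {in E &, injective lam}.
Proof. by move=> cE Q; apply: smono_inj (QQ_smono cE Q) cE. Qed.

Lemma PA E D' g b' : chainb E -> QQ E -> img th E D' g b' ->
  forall x y, x \in E -> y \in E -> x != y -> lam x \in D'.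
Proof.
move=> cE Q hi x y xE yE nxy.
have gx := img_in hi xE; have gy := img_in hi yE.
case: (comparable_ltgtP (chainbP _ cE x y xE yE)) => [xy|yx|exy].
- have e := UI (q := exist _ (x, y) xy) (Q x xE) (Q y yE) erefl.
  rewrite (img_val hi (p := exist _ (x, y) xy) xE yE xy erefl) in e.
  by case: (b) (b') e => [] [] [e1 e2]; rewrite -?e1 -?e2.
- have e := UI (q := exist _ (y, x) yx) (Q y yE) (Q x xE) erefl.
  rewrite (img_val hi (p := exist _ (y, x) yx) yE xE yx erefl) in e.
  by case: (b) (b') e => [] [] [e1 e2]; rewrite -?e1 -?e2.
- by rewrite exy eqxx in nxy.
Qed.

Lemma QIP E : maxchain E -> QQ E -> forall a c, a \in E -> c \in E -> a < c ->
  forall x, x \in E -> ext (lam x) = ext x.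
Proof.
move=> mE Q a c aE cE ac.
have cE' := maxchain_chain mE.
case: (HM mE) => D' [g [b' hi]].
have sm := QQ_smono cE' Q.
have eq : lam @: E = D'.
  apply/eqP; rewrite eqEcard; apply/andP; split.
  - apply/subsetP => y /imsetP [x xE ->].
    case: (x =P a) => [xa|xa].
    + apply: (PA cE' Q hi (y := c)) => //; rewrite xa; apply/negP => /eqP ea.
      by rewrite ea ltxx in ac.
    + by apply: (PA cE' Q hi (y := a)) => //; apply/eqP.
  - case: hi => _ sg <- _.
    by rewrite !card_in_imset //; [exact: smono_inj sm cE' | exact: smono_inj sg cE'].
case: hi => mD' _ _ _.
exact: (ext_image mE mD' eq sm).
Qed.

Lemma SL E E' a c : maxchain E -> QQ E -> maxchain E' ->
  a \in E -> c \in E -> a \in E' -> c \in E' -> a < c ->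
  (exists2 w, (w \in E) && (w \in E') & (w != a) && (w != c)) \/ (ext a != ext c) ->
  QQ E'.
Proof.
move=> mE Q mE' aE cE aE' cE' ac cond.
have cEE := maxchain_chain mE.
case: (HM mE') => D' [g [b' hi]].
have K := KRE (maxchain_chain mE') hi.
have gi : {in E' &, injective g} by case: hi => _ sg _ _; apply: smono_inj sg (maxchain_chain mE').
have ac' : a != c by apply/negP => /eqP ea; rewrite ea ltxx in ac.
have gac : g a != g c by apply/negP => /eqP /(gi _ _ aE' cE') /eqP; apply/negP.
have Ka : forall v, (ev (lam c) v - ev (lam a) v)%R = if b == b' then (ev (g c) v - ev (g a) v)%R
                          else (ev (g a) v - ev (g c) v)%R.
  by move=> v; rewrite -(Q a aE) -(Q c cE); exact: K.
case bb: (b == b') Ka => Ka.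
- have [e1 e2] : lam c = g c /\ lam a = g a by apply: VL => //; rewrite eq_sym.
  move=> x xE'.
  have [ux _] : unit x /\ lam x = g x.
    apply: unit_of => v; have := K a x aE' xE' v; rewrite bb (Q a aE) e2.
    by move/(congr1 (fun t => t + ev (g a) v)%R); rewrite !GRing.subrK.
  exact: ux.
- have [e1 e2] : lam c = g a /\ lam a = g c by apply: VL.
  exfalso; case: cond => [[w /andP[wE wE'] /andP[wa wc]]|ne].
  + have Kw : forall v, (ev (lam w) v - ev (lam a) v)%R = (ev (g a) v - ev (g w) v)%R.
      by move=> v; rewrite -(Q a aE) -(Q w wE) K // bb.
    have gaw : g a != g w by apply/negP => /eqP /(gi _ _ aE' wE') /eqP; rewrite eq_sym (negbTE wa).
    have [e3 _] : lam w = g a /\ lam a = g w by apply: VL.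
    have : lam w = lam c by rewrite e3 e1.
    by move/(lam_inj cEE Q wE cE) => /eqP; rewrite (negbTE wc).
  + have h1 := QIP mE Q aE cE ac aE.
    case: hi => mD' sg gE' _.
    have h2 := ext_image mE' mD' gE' sg cE'.
    by move: ne; rewrite -h1 -h2 e2 eqxx.
Qed.


Lemma LS E1 E2 z : maxchain E1 -> QQ E1 -> maxchain E2 -> z \in E1 -> z \in E2 ->
  ~~ is_min z -> ~~ is_max z -> QQ E2.
Proof.
move=> m1 Q1 m2 z1 z2 nmin nmax.
set E3 := [set x in E1 | x <= z] :|: [set x in E2 | z <= x].
have m3 : maxchain E3 by apply: splice_maxchain.
have c1 := chainbP _ (maxchain_chain m1); have c2 := chainbP _ (maxchain_chain m2).
have extz : ext z = false by rewrite /ext (negbTE nmin) (negbTE nmax).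
have [u uE1 uz] : exists2 u, u \in E1 & u < z.
  move: nmin; rewrite (maxchain_min m1 z1) => /forall_inPn [u uE1 nzu]; exists u => //.
  by case: (comparable_ltgtP (c1 z u z1 uE1)) nzu.
have [w' wE2 zw] : exists2 w', w' \in E2 & z < w'.
  move: nmax; rewrite (maxchain_max m2 z2) => /forall_inPn [w' wE2 nzw]; exists w' => //.
  by case: (comparable_ltgtP (c2 z w' z2 wE2)) nzw.
have uE3 : u \in E3 by rewrite !inE uE1 (ltW uz).
have zE3 : z \in E3 by rewrite !inE z1 lexx.
have wE3 : w' \in E3 by rewrite !inE wE2 (ltW zw) orbT.
have Q3 : QQ E3.
  apply: (SL m1 Q1 m3 uE1 z1 uE3 zE3 uz).
  case: (boolP [exists w in E1, (w < z) && (w != u)]) => [/exists_inP [w wE1 /andP[wz wu]]|none].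
  - left; exists w; first by rewrite wE1 !inE wE1 (ltW wz).
    by rewrite wu (lt_eqF wz).
  - right; rewrite extz /ext.
    suff -> : is_min u by [].
    rewrite (maxchain_min m1 uE1); apply/forall_inP => e eE1.
    case: (comparable_ltgtP (c1 e z eE1 z1)) => [ez|ze|ez].
    + have : e == u.
        apply: contraNT none => eu; apply/exists_inP; exists e => //; by rewrite ez eu.
      by move/eqP->.
    + by apply: le_trans (ltW uz) (ltW ze).
    + by rewrite ez ltW.
apply: (SL m3 Q3 m2 zE3 wE3 z2 wE2 zw).
case: (boolP [exists w in E2, (z < w) && (w != w')]) => [/exists_inP [w wE2' /andP[zw' ww]]|none].
- left; exists w; first by rewrite wE2' !inE wE2' (ltW zw') orbT.
  by rewrite ww andbT eq_sym (lt_eqF zw').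
- right; rewrite extz /ext.
  suff -> : is_max w' by rewrite orbT.
  rewrite (maxchain_max m2 wE2); apply/forall_inP => e eE2.
  case: (comparable_ltgtP (c2 e z eE2 z2)) => [ez|ze|ez].
  + by apply: le_trans (ltW ez) (ltW zw).
  + have : e == w'.
      apply: contraNT none => ew; apply/exists_inP; exists e => //; by rewrite ze ew.
    by move/eqP->.
  + by rewrite ez ltW.
Qed.

Definition Inv E := [/\ maxchain E, QQ E &
  exists2 D', maxchain D' /\ chain_equiv D D' & {in E, forall x, lam x \in D'}].

Lemma Inv_C : Inv C.
Proof.
have L0 : forall v, Lam x0 v = ev (f0 x0) v.
  by move=> v; rewrite /Lam /cc; ring.
have QC : forall x, x \in C -> unit x /\ lam x = f0 x.
  move=> x xC; apply: unit_of => v.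
  have := KRE (maxchain_chain hC) hCD x0C xC v; rewrite eqxx L0.
  by move/(congr1 (fun t => t + ev (f0 x0) v)%R); rewrite !GRing.subrK.
split=> //; first by move=> x xC; case: (QC x xC).
exists D; first by case: hCD => mD _ _ _; split=> //; apply: connect0.
by move=> x xC; case: (QC x xC) => _ ->; exact: (img_in hCD xC).
Qed.

Lemma Inv_step E1 E2 : linked E1 E2 -> Inv E1 -> Inv E2.
Proof.
case/and3P => m1 m2 /exists_inP [z]; rewrite inE => /andP[z1 z2] /andP[nmin nmax].
case=> _ Q1 [D1 [mD1 eD1] inD1].
have Q2 := LS m1 Q1 m2 z1 z2 nmin nmax.
have c2 := chainbP _ (maxchain_chain m2).
have [w' wE2 zw] : exists2 w', w' \in E2 & z < w'.
  move: nmax; rewrite (maxchain_max m2 z2) => /forall_inPn [w' wE2 nzw]; exists w' => //.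
  by case: (comparable_ltgtP (c2 z w' z2 wE2)) nzw.
case: (HM m2) => D2 [g [b' hi]].
have inD2 : {in E2, forall x, lam x \in D2}.
  move=> x xE2; case: (x =P z) => [xz|xz].
  - apply: (PA (maxchain_chain m2) Q2 hi (y := w')) => //.
    by rewrite xz (lt_eqF zw).
  - by apply: (PA (maxchain_chain m2) Q2 hi (y := z)) => //; apply/eqP.
have mD2 : maxchain D2 by case: hi.
split=> //; exists D2 => //; split=> //.
apply: connect_trans eD1 (connect1 _).
apply/and3P; split=> //; apply/exists_inP; exists (lam z).
  by rewrite inE (inD1 z z1) (inD2 z z2).
have e := QIP m2 Q2 z2 wE2 zw z2; rewrite /ext in e.
by rewrite -negb_or e negb_or nmin nmax.
Qed.

Lemma Inv_all E : chain_equiv C E -> Inv E.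
Proof.
case/connectP => p; move: Inv_C; elim: p C => [|E1 p IH] E0 I0 /=.
- by move=> _ ->.
- case/andP => lk pp le; apply: (IH E1) => //; exact: Inv_step lk I0.
Qed.

Lemma core_main : exists lm : X -> X,
  (forall x y, x \in supp C -> y \in supp C -> x < y ->
     maps_to th x y (if b then lm x else lm y) (if b then lm y else lm x)) /\
  (forall x, x \in supp C -> lm x \in supp D).
Proof.
have SU x : x \in supp C -> unit x /\ lam x \in supp D.
  case/bigcupP => E /andP[mE eE] xE; case: (Inv_all eE) => _ QE [D' [mD' eD'] inD'].
  split; first exact: QE.
  by apply/bigcupP; exists D'; [rewrite mD' eD' | apply: inD'].
exists lam; split; last by move=> x /SU [].
move=> x y xS yS xy p pv; rewrite (UI (proj1 (SU x xS)) (proj1 (SU y yS)) pv).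
by case: (b).
Qed.

End Core.
End P5.


Section P6.
Context {d : Order.disp_t} {X : finPOrderType d}.
Local Notation BT := (@Bt d X).

Lemma inv_img (th thi : BT -> BT) (thK : cancel th thi) (thiK : cancel thi th)
  C D f b : maxchain C -> img th C D f b ->
  exists g, img thi D C g b /\ {in C, forall x, g (f x) = x}.
Proof.
move=> mC hi; have cC := maxchain_chain mC.
case: (hi) => mD sf fCD mt.
have fi := smono_inj sf cC.
have fle := smono_le cC sf.
set g := fun y => odflt y [pick x in C | f x == y].
have gf : {in C, forall x, g (f x) = x}.
  move=> x xC; rewrite /g; case: pickP => [x' /andP[x'C /eqP e]|/(_ x)].
  - by apply: fi.
  - by rewrite xC eqxx.
exists g; split=> //; split=> //.
- move=> y1 y2; rewrite -fCD => /imsetP[x1 x1C ->] /imsetP[x2 x2C ->] lt12.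
  rewrite !gf //.
  have ne : x1 != x2 by apply/negP => /eqP e; rewrite e ltxx in lt12.
  have := fle x1 x2 x1C x2C; case: (b) => e.
  + by rewrite lt_neqAle ne e ltW.
  + have : ~~ (x1 <= x2) by rewrite e lt_geF.
    by case: (comparable_ltgtP (chainbP _ cC x1 x2 x1C x2C)).
- rewrite -fCD -imset_comp; apply/setP => x; apply/imsetP/idP.
  + by case=> y yC ->; rewrite /= gf.
  + by move=> xC; exists x => //=; rewrite gf.
- move=> y1 y2; rewrite -fCD => /imsetP[x1 x1C ->] /imsetP[x2 x2C ->] lt12 p pv.
  rewrite !gf //.
  have ne : x1 != x2 by apply/negP => /eqP e; rewrite e ltxx in lt12.
  have := fle x1 x2 x1C x2C; case: (b) mt => mt e.
  + have x12 : x1 < x2 by rewrite lt_neqAle ne e ltW.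
    have := mt x1 x2 x1C x2C x12 (exist _ (x1, x2) x12) erefl; rewrite -pv => h.
    have : th (exist _ (x1, x2) x12) = p by apply: val_inj.
    by move=> <-; rewrite thK.
  + have : ~~ (x1 <= x2) by rewrite e lt_geF.
    case: (comparable_ltgtP (chainbP _ cC x1 x2 x1C x2C)) => // x21 _.
    have := mt x2 x1 x2C x1C x21 (exist _ (x2, x1) x21) erefl; rewrite -pv => h.
    have : th (exist _ (x2, x1) x21) = p by apply: val_inj.
    by move=> <-; rewrite thK.
Qed.

Lemma roundtrip (th1 th2 : BT -> BT) (K : cancel th1 th2) (A B : {set X}) b
  (l1 l2 : X -> X) :
  (forall x y, x \in supp A -> y \in supp A -> x < y ->
     maps_to th1 x y (if b then l1 x else l1 y) (if b then l1 y else l1 x)) ->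
  (forall x, x \in supp A -> l1 x \in supp B) ->
  (forall x y, x \in supp B -> y \in supp B -> x < y ->
     maps_to th2 x y (if b then l2 x else l2 y) (if b then l2 y else l2 x)) ->
  forall x y, x \in supp A -> y \in supp A -> x < y ->
  l2 (l1 x) = x /\ l2 (l1 y) = y.
Proof.
move=> M1 S1 M2 x y xS yS xy.
set q := exist (fun p : X * X => p.1 < p.2) (x, y) xy.
have e1 := M1 x y xS yS xy q erefl.
have lt1 : (val (th1 q)).1 < (val (th1 q)).2 by case: (th1 q).
rewrite e1 /= in lt1.
have uS : (if b then l1 x else l1 y) \in supp B by case: (b); apply: S1.
have wS : (if b then l1 y else l1 x) \in supp B by case: (b); apply: S1.
have := M2 _ _ uS wS lt1 (th1 q) e1; rewrite K /=.
by case: (b) => -[<- <-].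
Qed.

Lemma partner (hX : @connected_poset d X) (a b0 : X) : a != b0 ->
  forall x : X, exists w : X, (x < w) || (w < x).
Proof.
move=> ab x.
have [t tx] : exists t, t != x.
  case: (a =P x) => [ax|ax]; last by exists a; apply/eqP.
  by exists b0; rewrite -ax eq_sym.
case/connectP: (hX x t) => [[|w p] /=]; first by move=> _ e; rewrite e eqxx in tx.
by case/andP => h _ _; exists w.
Qed.

Lemma other_in (E : {set X}) x : maxchain E -> x \in E ->
  (exists w : X, (x < w) || (w < x)) -> exists2 e, e \in E & e != x.
Proof.
move=> mE xE [w xw].
case: (boolP [exists e in E, e != x]) => [/exists_inP [e eE ex]|none]; first by exists e.
exfalso.
have wE : w \in E.
  apply: (maxchainP mE) => e eE.
  have ex : e == x by apply: contraNT none => ne; apply/exists_inP; exists e.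
  rewrite (eqP ex); case/orP: xw => h; [rewrite comparable_sym|]; exact: lt_comparable.
have wx : w == x by apply: contraNT none => ne; apply/exists_inP; exists w.
by move: xw; rewrite (eqP wx) ltxx.
Qed.

End P6.


Unset Implicit Arguments.

Theorem theorem3p10 (d : Order.disp_t) (X : finPOrderType d)
  (hX : @connected_poset d X) (theta : @Bt d X -> @Bt d X)
  (htheta : inAM theta) (C D : {set X})
  (hC : maxchain C) (hD : image_chain theta C D) :
  exists lambda : X -> X,
    {in supp C &, injective lambda} /\ lambda @: supp C = supp D /\
    (({in supp C &, forall x y, (x <= y) = (lambda x <= lambda y)} /\
      {in supp C &, forall x y, x < y -> maps_to theta x y (lambda x) (lambda y)})
     \/
     ({in supp C &, forall x y, (x <= y) = (lambda y <= lambda x)} /\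
      {in supp C &, forall x y, x < y -> maps_to theta x y (lambda y) (lambda x)})).
Proof.
case: htheta => [[[thi thK thiK] HM0] Hadm].
have HM : inMb theta by apply: inM_inMb; split=> //; exists thi.
case: (image_chain_img hD) => f [b hi].
case: (boolP [exists a : X, exists b0 : X, a != b0]) => [/existsP [a /existsP [b0 ab]] | single].
-
  have HPhi := Phi_th thK thiK HM Hadm hX a.
  case: (fin_all_exists HPhi) => H HH.
  have HMi := inMb_thi thK HM.
  have HPhii := Phi_thi thK thiK HM Hadm hX a.
  case: (fin_all_exists HPhii) => H2 HH2.
  have [x0 x0C] : exists x0, x0 \in C.
    case: (set_0Vmem C) => [C0|[x0 x0C]]; last by exists x0.
    have : a \in C.
      apply: (maxchainP hC) => e; by rewrite C0 inE.
    by rewrite C0 inE.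
  case: (inv_img thK thiK hC hi) => g [hi' gf].
  have mD : maxchain D by case: hi.
  have fx0 : f x0 \in D by exact: (img_in hi x0C).
  case: (core_main HM HH hC hi x0C) => l1 [M1 S1].
  case: (core_main HMi HH2 mD hi' fx0) => l2 [M2 S2].
  have RT1 := roundtrip thK M1 S1 M2.
  have RT2 := roundtrip thiK M2 S2 M1.
  have part := partner hX ab.
  have back1 : {in supp C, forall x, l2 (l1 x) = x}.
    move=> x xS; case/bigcupP: (xS) => E /andP[mE eE] xE.
    case: (other_in mE xE (part x)) => y yE yx.
    have yS : y \in supp C by apply/bigcupP; exists E; rewrite ?mE ?eE.
    case: (comparable_ltgtP (chainbP _ (maxchain_chain mE) x y xE yE)) => [xy|yx'|e].
    + by case: (RT1 x y xS yS xy).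
    + by case: (RT1 y x yS xS yx').
    + by rewrite e eqxx in yx.
  have back2 : {in supp D, forall x, l1 (l2 x) = x}.
    move=> x xS; case/bigcupP: (xS) => E /andP[mE eE] xE.
    case: (other_in mE xE (part x)) => y yE yx.
    have yS : y \in supp D by apply/bigcupP; exists E; rewrite ?mE ?eE.
    case: (comparable_ltgtP (chainbP _ (maxchain_chain mE) x y xE yE)) => [xy|yx'|e].
    + by case: (RT2 x y xS yS xy).
    + by case: (RT2 y x yS xS yx').
    + by rewrite e eqxx in yx.
  have inj1 : {in supp C &, injective l1}.
    by move=> x y xS yS e; rewrite -(back1 x xS) -(back1 y yS) e.
  exists l1; split=> //; split.
  + apply/setP => y; apply/imsetP/idP => [[x xS ->]|yS]; first exact: S1.
    by exists (l2 y); [apply: S2 | rewrite back2].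
  + case: (b) M1 M2 => M1 M2; [left|right]; split => //.
    * move=> x y xS yS; apply/idP/idP.
      - rewrite le_eqVlt => /orP[/eqP->|xy]; first exact: lexx.
        have := M1 x y xS yS xy (exist _ (x, y) xy) erefl; case: (theta _) => [[p1 p2] /= lt] [<- <-].
        exact: ltW.
      - rewrite le_eqVlt => /orP[/eqP e|lt]; first by rewrite (inj1 x y xS yS e).
        have := M2 _ _ (S1 x xS) (S1 y yS) lt (exist _ (l1 x, l1 y) lt) erefl.
        rewrite !back1 //; case: (thi _) => [[p1 p2] /= lt'] [<- <-].
        exact: ltW.
    * move=> x y xS yS; apply/idP/idP.
      - rewrite le_eqVlt => /orP[/eqP->|xy]; first exact: lexx.
        have := M1 x y xS yS xy (exist _ (x, y) xy) erefl; case: (theta _) => [[p1 p2] /= lt] [<- <-].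
        exact: ltW.
      - rewrite le_eqVlt => /orP[/eqP e|lt]; first by rewrite (inj1 x y xS yS (esym e)).
        have := M2 _ _ (S1 y yS) (S1 x xS) lt (exist _ (l1 y, l1 x) lt) erefl.
        rewrite !back1 //; case: (thi _) => [[p1 p2] /= lt'] [<- <-].
        exact: ltW.
-
  have all_eq : forall x y : X, x = y.
    move=> x y; apply/eqP; apply: contraNT single => ne.
    by apply/existsP; exists x; apply/existsP; exists y.
  have mT : forall E : {set X}, maxchain E -> E = setT.
    move=> E mE; apply/setP => x; rewrite inE; apply: (maxchainP mE) => e _.
    by rewrite (all_eq x e) comparablexx.
  have mD : maxchain D by case: hi.
  have eCD : C = D by rewrite (mT C hC) (mT D mD).
  exists id; split; first by move=> x y _ _.
  split; first by rewrite -eCD; apply/setP => x; apply/imsetP/idP => [[y yS ->] //|xS]; exists x.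
  left; split=> // x y _ _; by rewrite (all_eq x y) ltxx.
Qed.
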